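(* Let $X$ be a Banach space and $A,B\in\mathcal{L}(X)$. Then $\sigma_d(AB)=\sigma_d(BA)$.
   Context: $\mathcal{L}(X)$ is the Banach algebra of bounded linear operators on $X$. An element $T$ of $\mathcal{L}(X)$ has a g-Drazin inverse if there is $S\in\mathcal{L}(X)$ with $S=STS$, $S$ commuting with every operator that commutes with $T$, and $T-T^2S$ quasinilpotent (spectral radius $0$). The g-Drazin spectrum is $\sigma_d(T)=\{\lambda\in\mathbb{C} : \lambda I-T \text{ has no g-Drazin inverse in } \mathcal{L}(X)\}$. *)

(* Defs.v *)
From Stdlib Require Import Reals.
Open Scope R_scope.

Record Cplx : Type := mkC { Re : R ; Im : R }.
Definition C0 : Cplx := mkC 0 0.
Definition C1 : Cplx := mkC 1 0.
Definition Cadd (a b : Cplx) : Cplx := mkC (Re a + Re b) (Im a + Im b).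
Definition Cmul (a b : Cplx) : Cplx :=
  mkC (Re a * Re b - Im a * Im b) (Re a * Im b + Im a * Re b).
Definition Cabs (a : Cplx) : R := sqrt (Re a * Re a + Im a * Im a).

Record CBanach : Type := {
  pt :> Type;
  vzero : pt;
  vadd : pt -> pt -> pt;
  vopp : pt -> pt;
  vscal : Cplx -> pt -> pt;
  vnorm : pt -> R;
  vadd_assoc : forall x y z, vadd x (vadd y z) = vadd (vadd x y) z;
  vadd_comm : forall x y, vadd x y = vadd y x;
  vadd_0 : forall x, vadd x vzero = x;
  vadd_opp : forall x, vadd x (vopp x) = vzero;
  vscal_1 : forall x, vscal C1 x = x;
  vscal_assoc : forall a b x, vscal a (vscal b x) = vscal (Cmul a b) x;
  vscal_distr_l : forall a x y, vscal a (vadd x y) = vadd (vscal a x) (vscal a y);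
  vscal_distr_r : forall a b x, vscal (Cadd a b) x = vadd (vscal a x) (vscal b x);
  vnorm_eq0 : forall x, vnorm x = 0 -> x = vzero;
  vnorm_scal : forall a x, vnorm (vscal a x) = Cabs a * vnorm x;
  vnorm_triangle : forall x y, vnorm (vadd x y) <= vnorm x + vnorm y;
  vcomplete : forall u : nat -> pt,
    (forall eps, eps > 0 -> exists N, forall m n, (m >= N)%nat -> (n >= N)%nat ->
        vnorm (vadd (u m) (vopp (u n))) < eps) ->
    exists l, forall eps, eps > 0 -> exists N, forall n, (n >= N)%nat ->
        vnorm (vadd (u n) (vopp l)) < eps
}.

Arguments vadd {_}. Arguments vopp {_}. Arguments vscal {_}. Arguments vnorm {_}.

Section Ops.
Variable X : CBanach.

Definition bounded_linear (T : X -> X) : Prop :=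
  (forall x y, T (vadd x y) = vadd (T x) (T y)) /\
  (forall a x, T (vscal a x) = vscal a (T x)) /\
  (exists M : R, forall x, vnorm (T x) <= M * vnorm x).

Definition opcomp (S T : X -> X) : X -> X := fun x => S (T x).
Definition opsub (S T : X -> X) : X -> X := fun x => vadd (S x) (vopp (T x)).
Definition opId : X -> X := fun x => x.
Definition shift (lam : Cplx) (T : X -> X) : X -> X := fun x => vadd (vscal lam x) (vopp (T x)).

Definition invertibleL (T : X -> X) : Prop :=
  exists S, bounded_linear S /\ opcomp S T = opId /\ opcomp T S = opId.

Definition spectrum (T : X -> X) (lam : Cplx) : Prop := ~ invertibleL (shift lam T).

(** Quasinilpotent: spectral radius sup{|lam| : lam in spectrum} equals 0,
    i.e. every spectral value has modulus 0. *)
Definition quasinilpotent (T : X -> X) : Prop :=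
  forall lam, spectrum T lam -> Cabs lam = 0.

Definition has_gDrazin (T : X -> X) : Prop :=
  exists S, bounded_linear S /\
    S = opcomp S (opcomp T S) /\
    (forall U, bounded_linear U -> opcomp U T = opcomp T U -> opcomp U S = opcomp S U) /\
    quasinilpotent (opsub T (opcomp T (opcomp T S))).

Definition sigma_d (T : X -> X) (lam : Cplx) : Prop := ~ has_gDrazin (shift lam T).

End Ops.

(* Main.v *)
Require Import Defs.
From Stdlib Require Import Reals.
From Stdlib Require Import Reals Lra ProofIrrelevance FunctionalExtensionality Classical.
From Stdlib Require Import Ncring Ncring_tac.
Open Scope R_scope.

Section V.
Variable X : CBanach.

Lemma vadd_0l (x : X) : vadd (vzero X) x = x.
Proof. rewrite vadd_comm; apply vadd_0. Qed.

Lemma vcancel (x : X) : vadd x x = x -> x = vzero X.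
Proof. intros H. rewrite <- (vadd_opp X x). rewrite <- H at 2.
  rewrite <- vadd_assoc, vadd_opp, vadd_0. reflexivity. Qed.

Lemma vscal_0 (x : X) : vscal C0 x = vzero X.
Proof. apply vcancel. rewrite <- vscal_distr_r. f_equal. unfold Cadd, C0; simpl. f_equal; ring. Qed.

Lemma vopp_unique (x : X) (y : X) : vadd x y = vzero X -> y = vopp x.
Proof. intros H. rewrite <- (vadd_0 X y). rewrite <- (vadd_opp X x).
  rewrite vadd_assoc, (vadd_comm X y x), H. apply vadd_0l. Qed.

Definition Cm1 := mkC (-1) 0.

Lemma vopp_scal (x : X) : vopp x = vscal Cm1 x.
Proof. symmetry; apply vopp_unique. rewrite <- (vscal_1 X x) at 1.
  rewrite <- vscal_distr_r. rewrite <- (vscal_0 x). f_equal. unfold Cadd, C0, C1, Cm1; simpl. f_equal; ring. Qed.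

Lemma vscal_vzero (a : Cplx) : vscal a (vzero X) = vzero X.
Proof. rewrite <- (vscal_0 (vzero X)) at 1. rewrite vscal_assoc.
  replace (Cmul a C0) with C0 by (destruct a; unfold Cmul, C0; simpl; f_equal; ring). apply vscal_0. Qed.

Lemma Cmul_comm a b : Cmul a b = Cmul b a.
Proof. destruct a, b; unfold Cmul; simpl; f_equal; ring. Qed.

Lemma vscal_comm (a : Cplx) (b : Cplx) (x : X) : vscal a (vscal b x) = vscal b (vscal a x).
Proof. rewrite !vscal_assoc, Cmul_comm. reflexivity. Qed.

Lemma vopp_add (x : X) (y : X) : vopp (vadd x y) = vadd (vopp x) (vopp y).
Proof. rewrite !vopp_scal, vscal_distr_l. reflexivity. Qed.

Lemma vopp_vscal (a : Cplx) (x : X) : vopp (vscal a x) = vscal a (vopp x).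
Proof. rewrite !vopp_scal, vscal_comm. reflexivity. Qed.

Lemma Cabs_C0 : Cabs C0 = 0.
Proof. unfold Cabs, C0; simpl. replace (0*0+0*0) with 0 by ring. apply sqrt_0. Qed.

Lemma Cabs_m1 : Cabs Cm1 = 1.
Proof. unfold Cabs, Cm1; simpl. replace (-1 * -1 + 0*0) with 1 by ring. apply sqrt_1. Qed.

Lemma vnorm_zero : vnorm (vzero X) = 0.
Proof. rewrite <- (vscal_0 (vzero X)), vnorm_scal, Cabs_C0. ring. Qed.

Lemma vnorm_opp (x : X) : vnorm (vopp x) = vnorm x.
Proof. rewrite vopp_scal, vnorm_scal, Cabs_m1. ring. Qed.

Lemma vnorm_ge0 (x : X) : 0 <= vnorm x.
Proof. pose proof (vnorm_triangle X x (vopp x)). rewrite vadd_opp, vnorm_zero, vnorm_opp in H. lra. Qed.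

Lemma lin_zero (T : X -> X) : bounded_linear X T -> T (vzero X) = vzero X.
Proof. intros [Ha _]. apply vcancel. rewrite <- Ha, vadd_0. reflexivity. Qed.

Lemma lin_opp (T : X -> X) x : bounded_linear X T -> T (vopp x) = vopp (T x).
Proof. intros H. apply vopp_unique. rewrite <- (proj1 H), vadd_opp. apply lin_zero, H. Qed.

Lemma bound_abs (T : X -> X) : bounded_linear X T -> exists M, 0 <= M /\ forall x, vnorm (T x) <= M * vnorm x.
Proof. intros [_ [_ [M HM]]]. exists (Rabs M). split. apply Rabs_pos. intros x.
  eapply Rle_trans. apply HM. apply Rmult_le_compat_r. apply vnorm_ge0. apply Rle_abs. Qed.

Lemma bl_comp S T : bounded_linear X S -> bounded_linear X T -> bounded_linear X (opcomp X S T).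
Proof. intros HS HT. pose proof (bound_abs S HS) as [M1 [P1 H1]]. pose proof (bound_abs T HT) as [M2 [P2 H2]].
  destruct HS as [S1 [S2 _]]; destruct HT as [T1 [T2 _]]. unfold opcomp. split; [|split].
  - intros; rewrite T1, S1; reflexivity.
  - intros; rewrite T2, S2; reflexivity.
  - exists (M1*M2). intros x. eapply Rle_trans. apply H1. rewrite Rmult_assoc. apply Rmult_le_compat_l; auto. Qed.

Lemma bl_add S T : bounded_linear X S -> bounded_linear X T -> bounded_linear X (fun x => vadd (S x) (T x)).
Proof. intros HS HT. pose proof (bound_abs S HS) as [M1 [P1 H1]]. pose proof (bound_abs T HT) as [M2 [P2 H2]].
  destruct HS as [S1 [S2 _]]; destruct HT as [T1 [T2 _]]. split; [|split].
  - intros; rewrite T1, S1. rewrite !vadd_assoc. f_equal. rewrite <- !vadd_assoc. f_equal. apply vadd_comm.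
  - intros; rewrite T2, S2, vscal_distr_l; reflexivity.
  - exists (M1+M2). intros x. eapply Rle_trans. apply vnorm_triangle. specialize (H1 x); specialize (H2 x). lra. Qed.

Lemma bl_opp T : bounded_linear X T -> bounded_linear X (fun x => vopp (T x)).
Proof. intros HT. pose proof (bound_abs T HT) as [M2 [P2 H2]].
  destruct HT as [T1 [T2 _]]. split; [|split].
  - intros; rewrite T1, vopp_add; reflexivity.
  - intros; rewrite T2, vopp_vscal; reflexivity.
  - exists M2. intros x. rewrite vnorm_opp. auto. Qed.

Lemma bl_scal a : bounded_linear X (fun x => vscal a x).
Proof. split; [|split].
  - intros; apply vscal_distr_l.
  - intros; apply vscal_comm.
  - exists (Cabs a). intros; rewrite vnorm_scal. lra. Qed.

Lemma bl_zero : bounded_linear X (fun _ => vzero X).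
Proof. split; [|split].
  - intros; rewrite vadd_0; reflexivity.
  - intros; rewrite vscal_vzero; reflexivity.
  - exists 0. intros; rewrite vnorm_zero. pose proof (vnorm_ge0 x). lra. Qed.

Lemma bl_id : bounded_linear X (opId X).
Proof. unfold opId. split; [|split]; auto. exists 1. intros; lra. Qed.

Definition Op := {T : X -> X | bounded_linear X T}.
Definition ozero : Op := exist _ _ bl_zero.
Definition oone : Op := exist _ _ bl_id.
Definition oadd (f g : Op) : Op := exist _ _ (bl_add _ _ (proj2_sig f) (proj2_sig g)).
Definition oopp (f : Op) : Op := exist _ _ (bl_opp _ (proj2_sig f)).
Definition osub (f g : Op) : Op := exist _ (opsub X (proj1_sig f) (proj1_sig g)) (bl_add _ _ (proj2_sig f) (bl_opp _ (proj2_sig g))).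
Definition omul (f g : Op) : Op := exist _ _ (bl_comp _ _ (proj2_sig f) (proj2_sig g)).
Definition sc (a : Cplx) : Op := exist _ _ (bl_scal a).

Lemma op_ext (f g : Op) : (forall x, proj1_sig f x = proj1_sig g x) -> f = g.
Proof. destruct f as [f Hf], g as [g Hg]; simpl. intros H.
  assert (f = g) by (apply functional_extensionality; auto). subst. f_equal. apply proof_irrelevance. Qed.

#[local] Instance Oops : @Ring_ops Op ozero oone oadd omul osub oopp (@eq Op) := {}.

#[local] Instance Oring : @Ring Op ozero oone oadd omul osub oopp (@eq Op) Oops.
Proof. constructor.
  - apply eq_equivalence.
  - intros ? ? -> ? ? ->; reflexivity.
  - intros ? ? -> ? ? ->; reflexivity.
  - intros ? ? -> ? ? ->; reflexivity.
  - intros ? ? ->; reflexivity.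
  - intros; apply op_ext; intros; apply vadd_0l.
  - intros; apply op_ext; intros; apply vadd_comm.
  - intros; apply op_ext; intros; apply vadd_assoc.
  - intros; apply op_ext; intros; reflexivity.
  - intros; apply op_ext; intros; reflexivity.
  - intros; apply op_ext; intros; reflexivity.
  - intros; apply op_ext; intros; reflexivity.
  - intros x y z; apply op_ext; intros v. simpl. unfold opcomp. apply (proj1 (proj2_sig z)).
  - intros; apply op_ext; intros; reflexivity.
  - intros; apply op_ext; intros; apply vadd_opp.
Qed.

Declare Scope op_scope.
Delimit Scope op_scope with O.
Local Infix "*" := omul : op_scope.
Local Infix "+" := oadd : op_scope.
Local Infix "-" := osub : op_scope.
Local Notation "- x" := (oopp x) : op_scope.
Local Notation "1" := oone : op_scope.
Local Notation "0" := ozero : op_scope.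
Local Open Scope op_scope.

Ltac rr e := transitivity e; [non_commutative_ring|].

Definition unitO (u : Op) := exists v, v*u = 1 /\ u*v = 1.
Definition qnilO (t : Op) := forall l, Cabs l <> 0%R -> unitO (sc l - t).
Definition gD (t : Op) := exists s, s = s*(t*s) /\ (forall u, u*t = t*u -> u*s = s*u) /\ qnilO (t - t*(t*s)).
Definition cm (x y : Op) := x*y = y*x.

Lemma cm_sym x y : cm x y -> cm y x.
Proof. unfold cm; auto. Qed.
Lemma cm_1 x : cm 1 x.
Proof. unfold cm; non_commutative_ring. Qed.
Lemma cm_refl x : cm x x.
Proof. unfold cm; reflexivity. Qed.
Lemma cm_sub x y z : cm x z -> cm y z -> cm (x - y) z.
Proof. unfold cm; intros H1 H2. rr (x*z - y*z). rewrite H1, H2. non_commutative_ring. Qed.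
Lemma cm_mul x y z : cm x z -> cm y z -> cm (x * y) z.
Proof. unfold cm; intros H1 H2. rr (x*(y*z)). rewrite H2. rr ((x*z)*y). rewrite H1. non_commutative_ring. Qed.
Lemma cm_inv K w y : K*w = 1 -> w*K = 1 -> cm w y -> cm K y.
Proof. unfold cm; intros H1 H2 H3. rr (K*(y*w)*K + K*y*(1 - w*K)). rewrite <- H3, H2.
  rr ((K*w)*(y*K)). rewrite H1. non_commutative_ring. Qed.

Lemma unit_mul x y : unitO x -> unitO y -> unitO (x*y).
Proof. intros [v [H1 H2]] [w [H3 H4]]. exists (w*v). split.
  - rr (w*(v*x)*y). rewrite H1. rr (w*y). exact H3.
  - rr (x*(y*w)*v). rewrite H4. rr (x*v). exact H2. Qed.

Lemma unit_cancel c m z : c*m = 1 -> m*c = 1 -> unitO (c*z) -> unitO z.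
Proof. intros Hcm Hmc [V [H1 H2]]. exists (V*c). split.
  - rr (V*(c*z)). exact H1.
  - assert (E: z*(V*c) = (m*c)*z*(V*c)) by (rewrite Hmc; non_commutative_ring).
    rewrite E. rr (m*((c*z)*V)*c). rewrite H2. rr (m*c). exact Hmc. Qed.

Lemma jac1 x y : unitO (1 - x*y) -> unitO (1 - y*x).
Proof. intros [V [H1 H2]]. exists (1 + y*V*x). split.
  - rr (1 - y*x + y*(V*(1 - x*y))*x). rewrite H1. non_commutative_ring.
  - rr (1 - y*x + y*((1 - x*y)*V)*x). rewrite H2. non_commutative_ring. Qed.

Lemma cen l z : sc l * z = z * sc l.
Proof. apply op_ext; intros v; simpl; unfold opcomp. symmetry. apply (proj1 (proj2 (proj2_sig z))). Qed.

Lemma sc_mul a b : sc a * sc b = sc (Cmul a b).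
Proof. apply op_ext; intros v; simpl; unfold opcomp. apply vscal_assoc. Qed.
Lemma sc_one : sc Defs.C1 = 1.
Proof. apply op_ext; intros v; simpl. apply vscal_1. Qed.
Lemma sc_zero : sc C0 = 0.
Proof. apply op_ext; intros v; simpl. apply vscal_0. Qed.
Definition nrm (a : Cplx) := (Re a * Re a + Im a * Im a)%R.
Lemma Cabs_nz a : Cabs a <> 0%R -> nrm a <> 0%R.
Proof. unfold Cabs, nrm. intros H E. apply H. rewrite E. apply sqrt_0. Qed.
Lemma nz_Cabs a : nrm a <> 0%R -> Cabs a <> 0%R.
Proof. unfold Cabs, nrm. intros H E. apply sqrt_eq_0 in E. auto. nra. Qed.
Lemma Cabs0 a : Cabs a = 0%R -> a = C0.
Proof. intros H. destruct (Req_dec (nrm a) 0) as [E|E].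
  - unfold nrm in E. destruct a as [x y]; simpl in *. unfold C0. f_equal; nra.
  - exfalso. apply (nz_Cabs a E H). Qed.
Lemma Cmul_assoc a b c : Cmul a (Cmul b c) = Cmul (Cmul a b) c.
Proof. destruct a, b, c; unfold Cmul; simpl; f_equal; ring. Qed.
Lemma Cmul_1l a : Cmul Defs.C1 a = a.
Proof. destruct a; unfold Cmul, Defs.C1; simpl; f_equal; ring. Qed.
Lemma Cmul_nz a b : Cabs a <> 0%R -> Cabs b <> 0%R -> Cabs (Cmul a b) <> 0%R.
Proof. intros Ha Hb. apply Cabs_nz in Ha, Hb. apply nz_Cabs.
  assert (nrm (Cmul a b) = nrm a * nrm b)%R by (destruct a, b; unfold nrm, Cmul; simpl; ring).
  rewrite H. apply Rmult_integral_contrapositive; auto. Qed.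
Lemma Cinv a : Cabs a <> 0%R -> exists b, Cmul a b = Defs.C1 /\ Cabs b <> 0%R.
Proof. intros Ha. pose proof (Cabs_nz a Ha) as Hn. unfold nrm in Hn.
  exists (mkC (Re a / (Re a * Re a + Im a * Im a)) (- Im a / (Re a * Re a + Im a * Im a))).
  assert (E : Cmul a (mkC (Re a / (Re a * Re a + Im a * Im a)) (- Im a / (Re a * Re a + Im a * Im a))) = Defs.C1).
  { destruct a as [x y]; unfold Cmul, Defs.C1; simpl in *. f_equal; field; auto. }
  split; auto. intros H. apply Cabs0 in H. rewrite H in E. unfold Cmul, C0, Defs.C1 in E.
  injection E. intros _ E1. simpl in E1. lra. Qed.
Lemma Cabs_C1 : Cabs Defs.C1 <> 0%R.
Proof. apply nz_Cabs. unfold nrm, Defs.C1; simpl. lra. Qed.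

Lemma qnil_swap x y : qnilO (x*y) -> qnilO (y*x).
Proof. intros H l Hl. destruct (Cinv l Hl) as [mu [Hm _]].
  assert (Hcm : sc l * sc mu = 1) by (rewrite sc_mul, Hm; apply sc_one).
  assert (Hmc : sc mu * sc l = 1) by (rewrite <- cen; exact Hcm).
  assert (E1 : sc l - x*y = sc l * (1 - (sc mu * x)*y)).
  { symmetry. rr (sc l - (sc l * sc mu)*x*y). rewrite Hcm. non_commutative_ring. }
  assert (E2 : sc l * (1 - y*(sc mu*x)) = sc l - y*x).
  { rr (sc l - (sc l * y)*(sc mu*x)). rewrite (cen l y). rr (sc l - y*((sc l * sc mu)*x)). rewrite Hcm. non_commutative_ring. }
  specialize (H l Hl). rewrite E1 in H. apply (unit_cancel _ _ _ Hcm Hmc) in H. apply jac1 in H.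
  rewrite <- E2. apply unit_mul; auto. exists (sc mu); split; auto. Qed.

Lemma gD_scale l mu t : Cmul l mu = Defs.C1 -> Cabs mu <> 0%R -> gD t -> gD (sc l * t).
Proof. intros Hm Hmu [s [Hs [Hc Hq]]].
  assert (Hcm : sc l * sc mu = 1) by (rewrite sc_mul, Hm; apply sc_one).
  assert (Hmc : sc mu * sc l = 1) by (rewrite <- cen; exact Hcm).
  exists (sc mu * s). split; [|split].
  - symmetry. rr (sc mu*(s*sc l)*(t*(sc mu*s))). rewrite <- (cen l s).
    rr ((sc mu*sc l)*(s*(t*sc mu)*s)). rewrite Hmc. rewrite <- (cen mu t).
    rr ((s*sc mu)*(t*s)). rewrite <- (cen mu s). rr (sc mu * (s*(t*s))). rewrite <- Hs. reflexivity.
  - intros u Hu. assert (Hut : u*t = t*u).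
    { assert (E : u*t = (sc mu*sc l)*(u*t)) by (rewrite Hmc; non_commutative_ring). rewrite E.
      rr (sc mu*((sc l*u)*t)). rewrite (cen l u). rr (sc mu*(u*(sc l*t))). rewrite Hu.
      rr ((sc mu*sc l)*(t*u)). rewrite Hmc; non_commutative_ring. }
    pose proof (Hc u Hut) as Hs'. rr ((u*sc mu)*s). rewrite <- (cen mu u). rr (sc mu*(u*s)). rewrite Hs'. non_commutative_ring.
  - assert (E: sc l*t - (sc l*t)*((sc l*t)*(sc mu*s)) = sc l*(t - t*(t*s))).
    { rr (sc l*t - sc l*t*sc l*(t*sc mu)*s). rewrite <- (cen mu t). rr (sc l*t - sc l*t*(sc l*sc mu)*t*s). rewrite Hcm. non_commutative_ring. }
    rewrite E. intros nu Hnu. 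
    assert (E2 : sc nu - sc l * (t - t*(t*s)) = sc l * (sc (Cmul mu nu) - (t - t*(t*s)))).
    { symmetry. rr (sc l*sc (Cmul mu nu) - sc l*(t - t*(t*s))). rewrite sc_mul, Cmul_assoc, Hm, Cmul_1l. reflexivity. }
    rewrite E2. apply unit_mul. exists (sc mu); split; auto. apply Hq. apply Cmul_nz; auto. Qed.

Lemma CH a b U Y : U*(b*a) = (b*a)*U -> Y*(a*U*b) = (a*U*b)*Y -> Y*(a*b) = (a*b)*Y ->
  U*(b*((a*b)*Y)*a) = (b*((a*b)*Y)*a)*U.
Proof. intros HU HY1 HY2. rr ((U*(b*a))*(b*Y*a)). rewrite HU. rr (b*((a*U*b)*Y)*a). rewrite <- HY1.
  rr ((b*Y*a)*(U*(b*a))). rewrite HU. rr (b*(Y*(a*b))*a*U). rewrite HY2. non_commutative_ring. Qed.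

Section Cl.
Variables a b s : Op.
Local Notation t := (a*b).
Hypothesis Hs : s = s*(t*s).
Hypothesis Hc : forall u, u*t = t*u -> u*s = s*u.
Hypothesis Hq : qnilO (t - t*(t*s)).
Let Hst : s*t = t*s := eq_sym (Hc t eq_refl).
Lemma cl_k1 : s*(s*t) = s.
Proof. rewrite Hst. symmetry; exact Hs. Qed.
Lemma cl_k2 : t*(s*s) = s.
Proof. rr ((t*s)*s). rewrite <- Hst. rr (s*(t*s)). symmetry; exact Hs. Qed.
Lemma cl_G1 : b*(s*s)*a = b*(s*s)*a*((b*a)*(b*(s*s)*a)).
Proof. symmetry. rr (b*(s*(s*t)*(t*(s*s)))*a). rewrite cl_k1, cl_k2. reflexivity. Qed.
Lemma cl_G3 : qnilO (b*a - (b*a)*((b*a)*(b*(s*s)*a))).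
Proof. assert (E : b*a - (b*a)*((b*a)*(b*(s*s)*a)) = b*((1 - t*s)*a)).
  { rr (b*a - b*(t*(t*(s*s)))*a). rewrite cl_k2. non_commutative_ring. }
  rewrite E. apply qnil_swap. assert (E2 : (1 - t*s)*a*b = t - t*(t*s)).
  { rr (t - t*(s*t)). rewrite Hst. reflexivity. }
  rewrite E2. exact Hq. Qed.
Lemma cl_G2 U : U*(b*a) = (b*a)*U -> U*(b*(s*s)*a) = (b*(s*s)*a)*U.
Proof. intros HU. assert (Hcab : (a*U*b)*t = t*(a*U*b)).
  { rr (a*(U*(b*a))*b). rewrite HU. non_commutative_ring. }
  pose proof (Hc _ Hcab) as Hcs.
  assert (ET : b*(t*(s*(s*s)))*a = b*(s*s)*a).
  { rr (b*((t*(s*s))*s)*a). rewrite cl_k2. reflexivity. }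
  rewrite <- ET. apply CH; auto.
  - apply cm_mul; [apply cm_sym; exact Hcs|]. apply cm_mul; apply cm_sym; exact Hcs.
  - apply cm_mul; [exact Hst|]. apply cm_mul; exact Hst. Qed.
End Cl.

Lemma cline a b : gD (a*b) -> gD (b*a).
Proof. intros [s [Hs [Hc Hq]]]. exists (b*(s*s)*a). split; [|split].
  - apply cl_G1; auto.
  - intros u Hu. apply cl_G2; auto.
  - apply cl_G3; auto.
Qed.

Lemma gen_tail (be p' S' Z U : Op) : be*S' = 1 - p' -> S'*be = 1 - p' -> p'*S' = 0 -> S'*p' = 0 ->
  p'*p' = p' -> be*p' = p'*be -> Z*(1 - be*p') = 1 -> (1 - be*p')*Z = 1 ->
  U*be = be*U -> U*p' = p'*U -> U*S' = S'*U.
Proof. intros E1 E2 E3 E4 E5 Hbp HZ1 HZ2 HU HUp.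
  assert (Hr1 : (be*p')*p' = be*p') by (rr (be*(p'*p')); rewrite E5; reflexivity).
  assert (Hr2 : p'*(be*p') = be*p') by (rr ((p'*be)*p'); rewrite <- Hbp; exact Hr1).
  assert (HZp : Z*p' = p'*Z).
  { apply (cm_inv Z (1 - be*p')); auto. apply cm_sub; [apply cm_1|]. unfold cm. rewrite Hr1, Hr2. reflexivity. }
  assert (HV2 : (be - p')*(S' - p'*Z) = 1).
  { rr (be*S' - (be*p')*Z - p'*S' + (p'*p')*Z). rewrite E1, E3, E5.
    rr (1 - p' + p'*((1 - be*p')*Z) + (p'*(be*p') - be*p')*Z). rewrite HZ2, Hr2. non_commutative_ring. }
  assert (HV1 : (S' - p'*Z)*(be - p') = 1).
  { rr (S'*be - S'*p' - (p'*Z)*be + (p'*Z)*p'). rewrite E2, E4, <- HZp.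
    rr (1 - p' - Z*(p'*be) + Z*(p'*p')). rewrite <- Hbp, E5.
    rr (1 - p' + Z*(1 - be*p')*p' + Z*((be*p')*p' - be*p')). rewrite HZ1, Hr1. non_commutative_ring. }
  assert (HVU : cm (S' - p'*Z) U).
  { apply (cm_inv _ (be - p')); auto. apply cm_sub; unfold cm; symmetry; auto. }
  assert (ES : (S' - p'*Z)*(1 - p') = S').
  { rr (S' - S'*p' - p'*Z + (p'*Z)*p'). rewrite <- HZp. rewrite E4.
    rr (S' - Z*p' + Z*(p'*p')). rewrite E5. non_commutative_ring. }
  assert (H : cm ((S' - p'*Z)*(1 - p')) U).
  { apply cm_mul; auto. apply cm_sub; [apply cm_1|]. unfold cm; symmetry; auto. }
  rewrite ES in H. symmetry. exact H. Qed.

Section Jac.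
Variables a b s K : Op.
Local Notation al := (1 - a*b).
Local Notation p := (1 - al*s).
Local Notation q := (al - al*(al*s)).
Hypothesis Hs : s = s*(al*s).
Hypothesis Hc : forall u, u*al = al*u -> u*s = s*u.
Hypothesis Hq : qnilO q.
Hypothesis HK1 : K*(1 - q) = 1.
Hypothesis HK2 : (1 - q)*K = 1.
Let Hst : s*al = al*s := eq_sym (Hc al eq_refl).

Lemma j_pa : p*al = al*p.
Proof. rr (al - al*(s*al)). rewrite Hst. non_commutative_ring. Qed.
Lemma j_pp : p*p = p.
Proof. rr (1 - al*s - al*s + al*(s*(al*s))). rewrite <- Hs. non_commutative_ring. Qed.
Lemma j_ps : p*s = 0.
Proof. rr (s - (al*s)*s). rewrite <- Hst. rr (s - s*(al*s)). rewrite <- Hs. non_commutative_ring. Qed.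
Lemma j_sp : s*p = 0.
Proof. rr (s - s*(al*s)). rewrite <- Hs. non_commutative_ring. Qed.
Lemma j_pq : p*q = q.
Proof. rr (p*al*p). rewrite j_pa. rr (al*(p*p)). rewrite j_pp. non_commutative_ring. Qed.
Lemma j_qp : q*p = q.
Proof. rr (al*(p*p)). rewrite j_pp. non_commutative_ring. Qed.
Lemma j_qa : cm q al.
Proof. unfold cm. rr (al*(p*al)). rewrite j_pa. non_commutative_ring. Qed.
Lemma j_Kp : cm K p.
Proof. apply (cm_inv K (1 - q)); auto. apply cm_sub; [apply cm_1|]. unfold cm. rewrite j_qp, j_pq. reflexivity. Qed.
Lemma j_Ka : cm K al.
Proof. apply (cm_inv K (1 - q)); auto. apply cm_sub; [apply cm_1|]. apply j_qa. Qed.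
Lemma j_pqK : (p - al*p)*K = p.
Proof. rr ((p - q)*K). rr (p*((1-q)*K) + (p*q - q)*K). rewrite HK2, j_pq. non_commutative_ring. Qed.
Lemma j_abw : (a*b)*(p*K) = p.
Proof. rr ((p - al*p)*K). apply j_pqK. Qed.
Lemma j_wab : (p*K)*(a*b) = p.
Proof. rr (p*K - p*(K*al)). rewrite j_Ka. rr ((p - p*al)*K). rewrite j_pa. apply j_pqK. Qed.
Lemma j_wp : (p*K)*p = p*K.
Proof. rr (p*(K*p)). rewrite j_Kp. rr ((p*p)*K). rewrite j_pp. reflexivity. Qed.
Lemma j_pw : p*(p*K) = p*K.
Proof. rr ((p*p)*K). rewrite j_pp. reflexivity. Qed.

Local Notation w := (p*K).
Local Notation S' := (1 + b*s*a - b*w*a).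
Local Notation be := (1 - b*a).
Local Notation p' := (b*w*a).

Lemma j_E1 : be*S' = 1 - p'.
Proof. rr (1 - b*a + b*(al*s)*a - b*(p*K)*a + b*((a*b)*(p*K))*a). rewrite j_abw. non_commutative_ring. Qed.
Lemma j_E2 : S'*be = 1 - p'.
Proof. rr (1 - b*a + b*(s*al)*a - b*(p*K)*a + b*((p*K)*(a*b))*a). rewrite j_wab, Hst. non_commutative_ring. Qed.
Lemma j_E3 : p'*S' = 0.
Proof. rr (b*(p*K)*a + b*((p*K)*(a*b))*s*a - b*((p*K)*(a*b))*(p*K)*a). rewrite j_wab.
  rr (b*(p*K)*a + b*(p*s)*a - b*(p*(p*K))*a). rewrite j_ps, j_pw. non_commutative_ring. Qed.
Lemma j_E4 : S'*p' = 0.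
Proof. rr (b*(p*K)*a + b*(s*((a*b)*(p*K)))*a - b*((p*K)*((a*b)*(p*K)))*a). rewrite j_abw.
  rr (b*(p*K)*a + b*(s*p)*a - b*((p*K)*p)*a). rewrite j_sp, j_wp. non_commutative_ring. Qed.
Lemma j_E5 : p'*p' = p'.
Proof. rr (b*((p*K)*(a*b))*(p*K)*a). rewrite j_wab. rr (b*(p*(p*K))*a). rewrite j_pw. reflexivity. Qed.

Lemma j_G1 : S' = S'*(be*S').
Proof. rewrite j_E1. symmetry. rr (S' - S'*p'). rewrite j_E4. non_commutative_ring. Qed.

Lemma j_Er : be - be*(be*S') = be*p'.
Proof. rewrite j_E1. non_commutative_ring. Qed.

Lemma j_G3 : qnilO (be - be*(be*S')).
Proof. rewrite j_Er. assert (E : be*p' = b*((p*K - p)*a)).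
  { rr (b*(p*K)*a - b*((a*b)*(p*K))*a). rewrite j_abw. non_commutative_ring. }
  rewrite E. apply qnil_swap. assert (E2 : (p*K - p)*a*b = q).
  { rr ((p*K)*(a*b) - p*(a*b)). rewrite j_wab. rr (p*al). rewrite j_pa. non_commutative_ring. }
  rewrite E2. exact Hq. Qed.

Lemma j_bp : be*p' = p'*be.
Proof. transitivity (be*(1 - S'*be)). { rewrite j_E2. non_commutative_ring. }
  transitivity ((1 - be*S')*be). { non_commutative_ring. } rewrite j_E1. non_commutative_ring. Qed.

Lemma j_G2 U : U*be = be*U -> U*S' = S'*U.
Proof. intros HU. assert (HUba : U*(b*a) = (b*a)*U).
  { rr (U - U*be). rewrite HU. non_commutative_ring. }
  assert (Hcab : cm (a*b) (a*U*b)).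
  { unfold cm. symmetry. rr (a*(U*(b*a))*b). rewrite HUba. non_commutative_ring. }
  assert (Hca : cm al (a*U*b)) by (apply cm_sub; [apply cm_1| exact Hcab]).
  assert (Hcs : cm s (a*U*b)) by (unfold cm; symmetry; apply Hc; symmetry; exact Hca).
  assert (Hcp : cm p (a*U*b)) by (apply cm_sub; [apply cm_1| apply cm_mul; auto]).
  assert (Hcq : cm q (a*U*b)) by (apply cm_sub; auto; apply cm_mul; auto; apply cm_mul; auto).
  assert (HcK : cm K (a*U*b)) by (apply (cm_inv K (1 - q)); auto; apply cm_sub; auto; apply cm_1).
  assert (Hcw : cm w (a*U*b)) by (apply cm_mul; auto).
  assert (Hwab : cm w (a*b)) by (unfold cm; rewrite j_wab, j_abw; reflexivity).
  assert (Ew : (a*b)*((p*K)*(p*K)) = p*K) by (rr (((a*b)*(p*K))*(p*K)); rewrite j_abw; apply j_pw).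
  assert (HUp : U*p' = p'*U).
  { pose proof (CH a b U (w*w) HUba (cm_mul _ _ _ Hcw Hcw) (cm_mul _ _ _ Hwab Hwab)) as H.
    rewrite Ew in H. exact H. }
  assert (Hr : unitO (1 - be*p')).
  { pose proof (j_G3 Defs.C1 Cabs_C1) as H. rewrite j_Er, sc_one in H. exact H. }
  destruct Hr as [Z [HZ1 HZ2]].
  exact (gen_tail be p' S' Z U j_E1 j_E2 j_E3 j_E4 j_E5 j_bp HZ1 HZ2 HU HUp).
Qed.
End Jac.

Lemma jac_gD a b : gD (1 - a*b) -> gD (1 - b*a).
Proof. intros [s [Hs [Hc Hq]]].
  destruct (Hq Defs.C1 Cabs_C1) as [K [HK1 HK2]]. rewrite sc_one in HK1, HK2.
  exists (1 + b*s*a - b*((1 - (1 - a*b)*s)*K)*a). split; [|split].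
  - apply j_G1; auto.
  - intros u Hu. apply j_G2; auto.
  - apply j_G3; auto.
Qed.

Lemma key a b l : gD (sc l - a*b) -> gD (sc l - b*a).
Proof. intros H. destruct (Req_dec (Cabs l) 0%R) as [Hl|Hl].
  - apply Cabs0 in Hl. subst l. rewrite sc_zero in *.
    assert (E1 : 0 - a*b = (- a)*b) by non_commutative_ring. rewrite E1 in H.
    apply cline in H. assert (E2 : b*(-a) = 0 - b*a) by non_commutative_ring. rewrite <- E2. exact H.
  - destruct (Cinv l Hl) as [mu [Hm Hmu]].
    assert (Hcm : sc l * sc mu = 1) by (rewrite sc_mul, Hm; apply sc_one).
    assert (Hmc : sc mu * sc l = 1) by (rewrite <- cen; exact Hcm).
    assert (Hm' : Cmul mu l = Defs.C1) by (rewrite Cmul_comm; exact Hm).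
    assert (E1 : sc l - a*b = sc l * (1 - (sc mu * a)*b)).
    { symmetry. rr (sc l - (sc l * sc mu)*a*b). rewrite Hcm. non_commutative_ring. }
    assert (E2 : sc l * (1 - b*(sc mu*a)) = sc l - b*a).
    { rr (sc l - (sc l * b)*(sc mu*a)). rewrite (cen l b). rr (sc l - b*((sc l * sc mu)*a)). rewrite Hcm. non_commutative_ring. }
    rewrite E1 in H. apply (gD_scale mu l) in H; auto.
    assert (E3 : sc mu * (sc l * (1 - sc mu * a * b)) = 1 - (sc mu * a) * b).
    { rr ((sc mu * sc l) * (1 - sc mu * a * b)). rewrite Hmc. non_commutative_ring. }
    rewrite E3 in H. apply jac_gD in H. rewrite <- E2. apply (gD_scale l mu); auto.
Qed.

Lemma inv_iff (t : Op) : invertibleL X (proj1_sig t) <-> unitO t.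
Proof. split.
  - intros [S [HS [H1 H2]]]. exists (exist _ S HS). split; apply op_ext; intros v; simpl.
    + exact (equal_f H1 v).
    + exact (equal_f H2 v).
  - intros [v [H1 H2]]. exists (proj1_sig v). split; [exact (proj2_sig v)|]. split.
    + exact (f_equal (@proj1_sig _ _) H1).
    + exact (f_equal (@proj1_sig _ _) H2).
Qed.

Lemma qnil_iff (t : Op) : quasinilpotent X (proj1_sig t) <-> qnilO t.
Proof. split.
  - intros H l Hl. apply (inv_iff (sc l - t)). apply NNPP. intros Hn. apply Hl. apply H. exact Hn.
  - intros H l Hs. apply NNPP. intros Hl. apply Hs. apply (inv_iff (sc l - t)). apply H. exact Hl.
Qed.

Lemma gD_iff (t : Op) : has_gDrazin X (proj1_sig t) <-> gD t.
Proof. split.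
  - intros [S [HS [Heq [Hc Hq]]]]. exists (exist _ S HS). split; [|split].
    + apply op_ext; intros v. exact (equal_f Heq v).
    + intros u Hu. apply op_ext; intros v. simpl.
      exact (equal_f (Hc (proj1_sig u) (proj2_sig u) (f_equal (@proj1_sig _ _) Hu)) v).
    + apply (qnil_iff (t - t*(t*exist _ S HS))). exact Hq.
  - intros [s [Hs [Hc Hq]]]. exists (proj1_sig s). split; [exact (proj2_sig s)|]. split; [|split].
    + exact (f_equal (@proj1_sig _ _) Hs).
    + intros U HU HUt. assert (E : exist _ U HU * t = t * exist _ U HU) by (apply op_ext; intros v; exact (equal_f HUt v)).
      exact (f_equal (@proj1_sig _ _) (Hc _ E)).
    + apply (qnil_iff (t - t*(t*s))). exact Hq.
Qed.
End V.

Theorem corollary4p3 (X : CBanach) (A B : X -> X) :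
  bounded_linear X A -> bounded_linear X B ->
  forall lam : Cplx, sigma_d X (opcomp X A B) lam <-> sigma_d X (opcomp X B A) lam.
Proof. intros HA HB lam. unfold sigma_d.
  pose (a := exist _ A HA : Op X). pose (b := exist _ B HB : Op X).
  split; intros H1 H2; apply H1.
  - apply (gD_iff X (osub X (sc X lam) (omul X a b))). apply key. apply (gD_iff X (osub X (sc X lam) (omul X b a))). exact H2.
  - apply (gD_iff X (osub X (sc X lam) (omul X b a))). apply key. apply (gD_iff X (osub X (sc X lam) (omul X a b))). exact H2.
Qed.
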